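(* Let $\bm{L}_t\in\mathbb{R}^{n_1\times n_1}$ and $\bm{R}_t\in\mathbb{R}^{n_2\times n_2}$ be diagonal matrices with positive diagonal entries. For any $\bm{A}\in\mathbb{R}^{n_1\times n_1}$, $\bm{B}\in\mathbb{R}^{n_1\times n_2}$ and $\bm{C}\in\mathbb{R}^{n_2\times n_2}$, $$\|\bm{A}\bm{B}\|_{\mathcal{W}_t}\le\|\bm{A}\|_{\bm{L}_t^{1/4}}\|\bm{B}\|_{\mathcal{W}_t}\quad\text{and}\quad \|\bm{B}\bm{C}\|_{\mathcal{W}_t}\le\mathrm{cond}(\bm{R}_t^{-1/4})\,\|\bm{B}\|_{\mathcal{W}_t}\,\|\bm{C}\|_{\bm{R}_t^{1/4}}.$$
   Context: $\|\bm{Z}\|_{\mathcal{W}_t}^2=\langle\bm{L}_t^{1/4}\bm{Z}\bm{R}_t^{1/4},\bm{Z}\rangle$ (equivalently $\|\bm{Z}\|_{\mathcal{W}_t}=\|\bm{L}_t^{1/8}\bm{Z}\bm{R}_t^{1/8}\|_F$). For a symmetric positive definite $\bm{M}$ of size $k$, $\|\bm{x}\|_{\bm{M}}=\langle\bm{M}\bm{x},\bm{x}\rangle^{1/2}$ on $\mathbb{R}^k$ and for $\bm{A}\in\mathbb{R}^{k\times k}$, $\|\bm{A}\|_{\bm{M}}=\sup_{\bm{x}\neq0}\|\bm{A}\bm{x}\|_{\bm{M}}/\|\bm{x}\|_{\bm{M}}$. $\mathrm{cond}(\bm{Z})=\sigma_{\max}(\bm{Z})/\sigma_{\min}(\bm{Z})$.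 In the paper $\bm{L}_t=\epsilon_t\bm{I}+\mathrm{diag}(\bm{G}_t\bm{G}_t^T)$, $\bm{R}_t=\epsilon_t\bm{I}+\mathrm{diag}(\bm{G}_t^T\bm{G}_t)$, $\epsilon_t>0$. *)

(* Defs.v *)
From HB Require Import structures.
From mathcomp Require Import all_boot all_order all_algebra.
From mathcomp Require Import boolp classical_sets reals.
Set Implicit Arguments. Unset Strict Implicit. Unset Printing Implicit Defensive.
Import Order.TTheory GRing.Theory Num.Theory.
Local Open Scope ring_scope.
Local Open Scope classical_set_scope.

Section Defs.
Variable R : realType.

Definition pos_diag_mx n (M : 'M[R]_n) : Prop :=
  is_diag_mx M /\ forall i, 0 < M i i.

Definition mxpow14 n (M : 'M[R]_n) : 'M[R]_n :=
  diag_mx (\row_i Num.sqrt (Num.sqrt (M i i))).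
Definition mxpow18 n (M : 'M[R]_n) : 'M[R]_n :=
  diag_mx (\row_i Num.sqrt (Num.sqrt (Num.sqrt (M i i)))).
Definition mxpowm14 n (M : 'M[R]_n) : 'M[R]_n :=
  diag_mx (\row_i (Num.sqrt (Num.sqrt (M i i)))^-1).

Definition frob_dot m n (X Y : 'M[R]_(m, n)) : R :=
  \sum_i \sum_j X i j * Y i j.

Definition Wnorm n1 n2 (L : 'M[R]_n1) (Rm : 'M[R]_n2) (Z : 'M[R]_(n1, n2)) : R :=
  Num.sqrt (frob_dot (mxpow14 L *m Z *m mxpow14 Rm) Z).

Definition vMnorm k (M : 'M[R]_k) (x : 'cV[R]_k) : R :=
  Num.sqrt (\sum_i (M *m x) i 0 * x i 0).

Definition opMnorm k (M : 'M[R]_k) (A : 'M[R]_k) : R :=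
  sup [set vMnorm M (A *m x) / vMnorm M x | x in [set x : 'cV[R]_k | x != 0]].

Definition euclid k (x : 'cV[R]_k) : R := Num.sqrt (\sum_i x i 0 ^+ 2).

Definition sigma_max k (Z : 'M[R]_k) : R :=
  sup [set euclid (Z *m x) / euclid x | x in [set x : 'cV[R]_k | x != 0]].
Definition sigma_min k (Z : 'M[R]_k) : R :=
  inf [set euclid (Z *m x) / euclid x | x in [set x : 'cV[R]_k | x != 0]].

Definition cond k (Z : 'M[R]_k) : R := sigma_max Z / sigma_min Z.

End Defs.

(* Main.v *)
Require Import Defs.
From HB Require Import structures.
From mathcomp Require Import all_boot all_order all_algebra.
From mathcomp Require Import boolp classical_sets reals.
From mathcomp Require Import ring lra.
Import Order.TTheory GRing.Theory Num.Theory.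
Local Open Scope ring_scope.
Local Open Scope classical_set_scope.
Set Implicit Arguments. Unset Strict Implicit. Unset Printing Implicit Defensive.

Section S.
Variable R : realType.

Lemma CS n (a b : 'I_n -> R) :
  (\sum_i a i * b i) ^+ 2 <= (\sum_i a i ^+ 2) * (\sum_i b i ^+ 2).
Proof.
have e1 : (\sum_i a i ^+ 2) * (\sum_i b i ^+ 2) =
   \sum_i \sum_j (a i ^+ 2 * b j ^+ 2).
  by rewrite mulr_suml; apply: eq_bigr => i _; rewrite mulr_sumr.
have e2 : (\sum_i a i ^+ 2) * (\sum_i b i ^+ 2) =
   \sum_i \sum_j (b i ^+ 2 * a j ^+ 2).
  by rewrite mulrC mulr_suml; apply: eq_bigr => i _; rewrite mulr_sumr.
have e3 : (\sum_i a i * b i) ^+ 2 =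
   \sum_i \sum_j ((a i * b i) * (a j * b j)).
  by rewrite expr2 mulr_suml; apply: eq_bigr => i _; rewrite mulr_sumr.
have E : \sum_i \sum_j (a i * b j - a j * b i) ^+ 2 =
   \sum_i \sum_j (a i ^+ 2 * b j ^+ 2) + \sum_i \sum_j (b i ^+ 2 * a j ^+ 2)
   - 2 * \sum_i \sum_j ((a i * b i) * (a j * b j)).
  rewrite mulr_sumr -big_split -sumrB /=; apply: eq_bigr => i _.
  rewrite mulr_sumr -big_split -sumrB /=; apply: eq_bigr => j _.
  ring.
have H : 0 <= \sum_i \sum_j (a i * b j - a j * b i) ^+ 2.
  by apply: sumr_ge0 => i _; apply: sumr_ge0 => j _; apply: sqr_ge0.
rewrite E -e1 -e2 -e3 in H.
lra.
Qed.

Lemma wCS n (w a b : 'I_n -> R) : (forall i, 0 < w i) ->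
  (\sum_i a i * b i) ^+ 2 <= (\sum_i a i ^+ 2 / w i) * (\sum_i w i * b i ^+ 2).
Proof.
move=> wp.
have := CS (fun i => a i / Num.sqrt (w i)) (fun i => Num.sqrt (w i) * b i).
have sw i : Num.sqrt (w i) != 0 by rewrite gt_eqF // sqrtr_gt0.
have sq i : Num.sqrt (w i) ^+ 2 = w i by rewrite sqr_sqrtr // ltW.
rewrite (eq_bigr (fun i => a i * b i)); last first.
  by move=> i _; rewrite mulrA divfK.
rewrite (eq_bigr (fun i => a i ^+ 2 / w i) (F1 := fun i => (a i / Num.sqrt (w i)) ^+ 2)); last first.
  by move=> i _; rewrite expr_div_n sq.
rewrite (eq_bigr (fun i => w i * b i ^+ 2) (F1 := fun i => (Num.sqrt (w i) * b i) ^+ 2)); first by [].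
by move=> i _; rewrite exprMn sq.
Qed.

Lemma sum_gt0_of n (f : 'I_n -> R) i : (forall j, 0 <= f j) -> f i != 0 ->
  0 < \sum_j f j.
Proof.
move=> f0 fi; rewrite lt_def sumr_ge0 ?andbT //.
apply/eqP => /(psumr_eq0P (P := xpredT) (fun j _ => f0 j)) H.
by move: fi; rewrite (H i) ?eqxx.
Qed.

Lemma sup_ge0_img T (P : set T) (f : T -> R) :
  (forall x, P x -> 0 <= f x) -> (exists M, forall x, P x -> f x <= M) ->
  0 <= sup [set f x | x in P] /\ (forall x, P x -> f x <= sup [set f x | x in P]).
Proof.
move=> f0 [M fM].
have ub : has_ubound [set f x | x in P].
  by exists M => y [x Px <-]; apply: fM.
have le x : P x -> f x <= sup [set f x | x in P].
  by move=> Px; apply: ub_le_sup => //; exists x.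
split => //.
have [[x Px]|nP] := pselect (exists x, P x).
  by apply: le_trans (f0 _ Px) (le _ Px).
rewrite (_ : [set f x | x in P] = set0) ?sup0 //.
apply/seteqP; split => y /=; last by [].
by case=> x Px _; exfalso; apply: nP; exists x.
Qed.


Definition dg n (M : 'M[R]_n) i := Num.sqrt (Num.sqrt (M i i)).

Lemma dg_gt0 n (M : 'M[R]_n) i : pos_diag_mx M -> 0 < dg M i.
Proof. by case=> _ h; rewrite /dg !sqrtr_gt0. Qed.

Lemma vMnormE n (M : 'M[R]_n) x :
  vMnorm (mxpow14 M) x = Num.sqrt (\sum_i dg M i * x i 0 ^+ 2).
Proof.
rewrite /vMnorm /mxpow14 mul_diag_mx; congr Num.sqrt.
by apply: eq_bigr => i _; rewrite !mxE expr2 mulrA.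
Qed.

Lemma WnormE n1 n2 (L : 'M[R]_n1) (Rt : 'M[R]_n2) Z :
  Wnorm L Rt Z = Num.sqrt (\sum_i \sum_j dg L i * dg Rt j * Z i j ^+ 2).
Proof.
rewrite /Wnorm /frob_dot /mxpow14 mul_diag_mx mul_mx_diag; congr Num.sqrt.
apply: eq_bigr => i _; apply: eq_bigr => j _; rewrite !mxE /dg; ring.
Qed.

Lemma nz_coord n (x : 'cV[R]_n) : x != 0 -> exists i, x i 0 != 0.
Proof.
move=> /eqP nx; apply: contrapT => H; apply: nx; apply/matrixP => i j.
rewrite (ord1 j) mxE; have [//|ne] := eqVneq (x i 0) 0; by exfalso; apply: H; exists i.
Qed.

Lemma sqrt_ratio_le (a E F : R) : 0 <= a -> 0 < E -> F <= a ^+ 2 * E ->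
  Num.sqrt F / Num.sqrt E <= a.
Proof.
move=> a0 E0 h; rewrite ler_pdivrMr ?sqrtr_gt0 //.
rewrite -(ger0_norm a0) -sqrtr_sqr -sqrtrM ?sqr_ge0 // ler_sqrt //.
by rewrite mulr_ge0 ?sqr_ge0 // ltW.
Qed.

Lemma sqrt_ratio_ge (a E F : R) : 0 <= a -> 0 < E -> a ^+ 2 * E <= F ->
  a <= Num.sqrt F / Num.sqrt E.
Proof.
move=> a0 E0 h; rewrite ler_pdivlMr ?sqrtr_gt0 //.
rewrite -(ger0_norm a0) -sqrtr_sqr -sqrtrM ?sqr_ge0 // ler_sqrt //.
by apply: le_trans h; rewrite mulr_ge0 ?sqr_ge0 // ltW.
Qed.

Lemma opM_bound n (M : 'M[R]_n) (hM : pos_diag_mx M) (A : 'M[R]_n) :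
  0 <= opMnorm (mxpow14 M) A /\ forall x : 'cV[R]_n,
  \sum_i dg M i * (A *m x) i 0 ^+ 2 <=
     opMnorm (mxpow14 M) A ^+ 2 * \sum_i dg M i * x i 0 ^+ 2.
Proof.
pose q := fun x : 'cV[R]_n => \sum_i dg M i * x i 0 ^+ 2.
have q0 x : 0 <= q x.
  by apply: sumr_ge0 => i _; rewrite mulr_ge0 ?sqr_ge0 // ltW // dg_gt0.
have qp x : x != 0 -> 0 < q x.
  move=> /nz_coord [i xi]; apply: (@sum_gt0_of _ _ i).
    by move=> j; rewrite mulr_ge0 ?sqr_ge0 // ltW // dg_gt0.
  by rewrite mulf_neq0 ?sqrf_eq0 // gt_eqF // dg_gt0.
pose c := \sum_i dg M i * \sum_k A i k ^+ 2 / dg M k.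
have c0 : 0 <= c.
  apply: sumr_ge0 => i _; apply: mulr_ge0; first by rewrite ltW // dg_gt0.
  by apply: sumr_ge0 => k _; rewrite divr_ge0 ?sqr_ge0 // ltW // dg_gt0.
have hq x : q (A *m x) <= c * q x.
  rewrite /q /c mulr_suml; apply: ler_sum => i _; rewrite mxE -mulrA.
  apply: ler_wpM2l; first by rewrite ltW // dg_gt0.
  exact: (wCS (w := dg M) (fun k => A i k) (fun k => x k 0) (fun k => dg_gt0 k hM)).
have fb : exists Mb, forall x, [set x : 'cV[R]_n | x != 0] x ->
    vMnorm (mxpow14 M) (A *m x) / vMnorm (mxpow14 M) x <= Mb.
  exists (Num.sqrt c) => x nx; rewrite !vMnormE.
  apply: sqrt_ratio_le; [exact: sqrtr_ge0 | exact: qp | ].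
  by rewrite sqr_sqrtr //; apply: hq.
have [K0 Kle] := sup_ge0_img
  (fun x _ => divr_ge0 (sqrtr_ge0 _) (sqrtr_ge0 _)) fb.
rewrite /opMnorm; split => // x.
set K := sup _ in K0 Kle *.
have [->|nx] := eqVneq x 0.
  rewrite mulmx0 big1 ?mulr0 //.
  by move=> i _; rewrite mxE expr0n /= mulr0.
have : vMnorm (mxpow14 M) (A *m x) / vMnorm (mxpow14 M) x <= K := Kle x nx.
rewrite !vMnormE ler_pdivrMr; last by rewrite sqrtr_gt0 qp.
move: (q0 (A *m x)) (q0 x) (sqr_sqrtr (q0 (A *m x))) (sqr_sqrtr (q0 x)).
rewrite /q => h1 h2 <- <-.
move: (sqrtr_ge0 (\sum_i dg M i * (A *m x) i 0 ^+ 2)) (sqrtr_ge0 (\sum_i dg M i * x i 0 ^+ 2)).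
set a := Num.sqrt _; set b := Num.sqrt _ => a0 b0 h.
rewrite -exprMn; apply: lerXn2r; [by [] | by rewrite nnegrE mulr_ge0 | ].
by rewrite !sqrtr_sqr !ger0_norm in h.
Qed.

Lemma dual n (r : 'I_n -> R) (C : 'M[R]_n) K rmin rmax :
  0 < rmin -> (forall k, rmin <= r k) -> (forall k, r k <= rmax) -> 0 <= K ->
  (forall x : 'cV[R]_n, \sum_i r i * (C *m x) i 0 ^+ 2 <=
                         K ^+ 2 * \sum_i r i * x i 0 ^+ 2) ->
  forall y : 'I_n -> R,
  \sum_j r j * (\sum_k y k * C k j) ^+ 2 <=
     (rmax / rmin * K) ^+ 2 * \sum_k r k * y k ^+ 2.
Proof.
move=> rmin0 hmin hmax K0 hK y.
have rp k : 0 < r k by apply: lt_le_trans (hmin k).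
pose z j := \sum_k y k * C k j.
pose S := \sum_j r j * z j ^+ 2.
pose Y := \sum_k r k * y k ^+ 2.
pose w : 'cV[R]_n := \col_j (r j * z j).
pose T := \sum_k (C *m w) k 0 ^+ 2 / r k.
pose U := \sum_k r k * (C *m w) k 0 ^+ 2.
pose V := \sum_k r k * w k 0 ^+ 2.
have S0 : 0 <= S by apply: sumr_ge0 => j _; rewrite mulr_ge0 ?sqr_ge0 ?ltW.
have Y0 : 0 <= Y by apply: sumr_ge0 => j _; rewrite mulr_ge0 ?sqr_ge0 ?ltW.
have eS : S = \sum_k (C *m w) k 0 * y k.
  transitivity (\sum_j \sum_k y k * C k j * (r j * z j)).
    apply: eq_bigr => j _.
    rewrite -mulr_suml (_ : r j * z j ^+ 2 = z j * (r j * z j)) //.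
    by rewrite expr2; ring.
  rewrite exchange_big /=; apply: eq_bigr => k _.
  rewrite mxE mulr_suml; apply: eq_bigr => j _; rewrite !mxE; ring.
have h1 : S ^+ 2 <= T * Y.
  rewrite eS; exact: (wCS (w := r) (fun k => (C *m w) k 0) y rp).
have h2 : rmin ^+ 2 * T <= U.
  rewrite /T /U mulr_sumr; apply: ler_sum => k _.
  have hk := hmin k; have rk := rp k.
  rewrite mulrA ler_pdivrMr //.
  have : rmin ^+ 2 <= r k ^+ 2 by nra.
  move=> h; have a0 := sqr_ge0 ((C *m w) k 0).
  set a := _ ^+ 2 in a0 *; nra.
have h3 : U <= K ^+ 2 * V by apply: hK.
have h4 : V <= rmax ^+ 2 * S.
  rewrite /V /S mulr_sumr; apply: ler_sum => k _; rewrite mxE.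
  have hk := hmax k; have rk := rp k.
  have : r k ^+ 2 <= rmax ^+ 2 by nra.
  move=> h; have a0 : 0 <= r k * z k ^+ 2 by rewrite mulr_ge0 ?sqr_ge0 ?ltW.
  rewrite (_ : r k * (r k * z k) ^+ 2 = r k ^+ 2 * (r k * z k ^+ 2)); last by ring.
  set a := r k * z k ^+ 2 in a0 *; nra.
have h1' : rmin ^+ 2 * S ^+ 2 <= rmin ^+ 2 * (T * Y) by rewrite ler_wpM2l ?sqr_ge0.
have h2' : rmin ^+ 2 * T * Y <= U * Y by rewrite ler_wpM2r.
have h3' : U * Y <= K ^+ 2 * V * Y by rewrite ler_wpM2r.
have h4' : K ^+ 2 * V * Y <= K ^+ 2 * (rmax ^+ 2 * S) * Y.
  by rewrite ler_wpM2r // ler_wpM2l ?sqr_ge0.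
have G : rmin ^+ 2 * S <= rmax ^+ 2 * K ^+ 2 * Y.
  have [S00|Sp] := eqVneq S 0.
    rewrite S00 mulr0; apply: mulr_ge0 => //; apply: mulr_ge0; exact: sqr_ge0.
  have Spos : 0 < S by rewrite lt_def Sp.
  rewrite -(ler_pM2r Spos).
  have e : rmin ^+ 2 * S * S = rmin ^+ 2 * S ^+ 2 by ring.
  rewrite e; lra.
rewrite -/Y (_ : (rmax / rmin * K) ^+ 2 * Y = (rmax ^+ 2 * K ^+ 2 * Y) / rmin ^+ 2).
  by rewrite ler_pdivlMr ?exprn_gt0 // mulrC.
by field; rewrite gt_eqF.
Qed.


Lemma cond_ge n (Rt : 'M[R]_n) (hR : pos_diag_mx Rt) jmin jmax :
  (forall k, dg Rt jmin <= dg Rt k) -> (forall k, dg Rt k <= dg Rt jmax) ->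
  dg Rt jmax / dg Rt jmin <= cond (mxpowm14 Rt).
Proof.
move=> hmin hmax.
have rp k : 0 < dg Rt k by apply: dg_gt0.
set rmin := dg Rt jmin in hmin *; set rmax := dg Rt jmax in hmax *.
have rmin0 : 0 < rmin by apply: rp.
have rmax0 : 0 < rmax by apply: rp.
pose E (x : 'cV[R]_n) := \sum_i x i 0 ^+ 2.
pose F (x : 'cV[R]_n) := \sum_i (x i 0 / dg Rt i) ^+ 2.
have eu x : euclid (mxpowm14 Rt *m x) = Num.sqrt (F x).
  rewrite /euclid /mxpowm14 mul_diag_mx; congr Num.sqrt.
  by apply: eq_bigr => i _; rewrite !mxE mulrC.
have Ep x : x != 0 -> 0 < E x.
  move=> /nz_coord [i xi]; apply: (@sum_gt0_of _ _ i) => [j|].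
    exact: sqr_ge0.
  by rewrite sqrf_eq0.
have iv k : rmax^-1 <= (dg Rt k)^-1 <= rmin^-1.
  by rewrite !lef_pV2 ?posrE ?hmin ?hmax.
have iv2 k : (rmax^-1) ^+ 2 <= (dg Rt k)^-1 ^+ 2 <= (rmin^-1) ^+ 2.
  case/andP: (iv k) => h1 h2; apply/andP; split; apply: lerXn2r => //;
    by rewrite nnegrE ltW // invr_gt0.
have lo x : (rmax^-1) ^+ 2 * E x <= F x.
  rewrite /E /F mulr_sumr; apply: ler_sum => k _.
  rewrite exprMn mulrC; apply: ler_wpM2l; first exact: sqr_ge0.
  by case/andP: (iv2 k).
have hi x : F x <= (rmin^-1) ^+ 2 * E x.
  rewrite /E /F mulr_sumr; apply: ler_sum => k _.
  rewrite exprMn mulrC; apply: ler_wpM2r; first exact: sqr_ge0.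
  by case/andP: (iv2 k).
pose f (x : 'cV[R]_n) := euclid (mxpowm14 Rt *m x) / euclid x.
have fE x : f x = Num.sqrt (F x) / Num.sqrt (E x) by rewrite /f eu.
have flo x : x != 0 -> rmax^-1 <= f x.
  move=> nx; rewrite fE; apply: sqrt_ratio_ge; [by rewrite ltW // invr_gt0 | exact: Ep | exact: lo].
have fhi x : x != 0 -> f x <= rmin^-1.
  move=> nx; rewrite fE; apply: sqrt_ratio_le; [by rewrite ltW // invr_gt0 | exact: Ep | exact: hi].
have Ed j : E (delta_mx j 0) = 1.
  rewrite /E (bigD1 j) //= big1 ?addr0; first by rewrite mxE !eqxx /= expr1n.
  by move=> i /negbTE nij; rewrite mxE nij /= expr0n.
have Fd j : F (delta_mx j 0) = (dg Rt j)^-1 ^+ 2.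
  rewrite /F (bigD1 j) //= big1 ?addr0; first by rewrite mxE !eqxx /= mul1r.
  by move=> i /negbTE nij; rewrite mxE nij /= mul0r expr0n.
have dnz j : delta_mx j 0 != 0 :> 'cV[R]_n.
  apply/eqP => /matrixP /(_ j 0); rewrite !mxE !eqxx /= => /eqP.
  by rewrite oner_eq0.
have fd j : (dg Rt j)^-1 <= f (delta_mx j 0).
  rewrite fE; apply: sqrt_ratio_ge; [by rewrite ltW // invr_gt0 | by rewrite Ed | ].
  by rewrite Ed Fd mulr1.
have fd' j : f (delta_mx j 0) <= (dg Rt j)^-1.
  rewrite fE; apply: sqrt_ratio_le; [by rewrite ltW // invr_gt0 | by rewrite Ed | ].
  by rewrite Ed Fd mulr1.
have [_ Smax] := sup_ge0_img (P := [set x : 'cV[R]_n | x != 0]) (f := f)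
  (fun x _ => divr_ge0 (sqrtr_ge0 _) (sqrtr_ge0 _))
  (ex_intro _ (rmin^-1) fhi).
have smax_ge : rmin^-1 <= sigma_max (mxpowm14 Rt).
  exact: le_trans (fd jmin) (Smax _ (dnz jmin)).
have smin_ge : rmax^-1 <= sigma_min (mxpowm14 Rt).
  apply: lb_le_inf; first by exists (f (delta_mx jmin 0)), (delta_mx jmin 0); [exact: dnz|].
  by move=> y [x nx <-]; apply: flo.
have smin_le : sigma_min (mxpowm14 Rt) <= rmax^-1.
  apply: le_trans (fd' jmax); apply: ge_inf; last by exists (delta_mx jmax 0); [exact: dnz|].
  by exists 0 => y [x nx <-]; apply: divr_ge0; apply: sqrtr_ge0.
have smin0 : 0 < sigma_min (mxpowm14 Rt) by apply: lt_le_trans smin_ge; rewrite invr_gt0.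
rewrite /cond ler_pdivlMr //.
apply: le_trans smax_ge.
apply: le_trans (_ : rmax / rmin * rmax^-1 <= _).
  by rewrite ler_wpM2l // divr_ge0 // ltW.
by rewrite mulrAC divff ?mul1r // gt_eqF.
Qed.

End S.
Local Close Scope classical_set_scope.

Theorem lemma3p5 (R : realType) (n1 n2 : nat)
  (L : 'M[R]_n1) (Rt : 'M[R]_n2)
  (hL : pos_diag_mx L) (hR : pos_diag_mx Rt)
  (A : 'M[R]_n1) (B : 'M[R]_(n1, n2)) (C : 'M[R]_n2) :
  Wnorm L Rt (A *m B) <= opMnorm (mxpow14 L) A * Wnorm L Rt B /\
  Wnorm L Rt (B *m C) <= cond (mxpowm14 Rt) * Wnorm L Rt B * opMnorm (mxpow14 Rt) C.
Proof.
have l0 i : 0 <= dg L i by rewrite ltW // dg_gt0.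
have r0 j : 0 <= dg Rt j by rewrite ltW // dg_gt0.
have W0 (Z : 'M[R]_(n1, n2)) : 0 <= \sum_i \sum_j dg L i * dg Rt j * Z i j ^+ 2.
  by apply: sumr_ge0 => i _; apply: sumr_ge0 => j _; apply: mulr_ge0; [apply: mulr_ge0|apply: sqr_ge0].
split.
  have [K0 hK] := opM_bound hL A.
  rewrite !WnormE.
  set K := opMnorm _ A in K0 hK *.
  rewrite -(ger0_norm K0) -sqrtr_sqr -sqrtrM ?sqr_ge0 // ler_sqrt; last first.
    by rewrite mulr_ge0 ?sqr_ge0.
  rewrite exchange_big [X in _ * X]exchange_big /= mulr_sumr; apply: ler_sum => j _.
  have := hK (col j B).
  have eL : \sum_i dg L i * dg Rt j * (A *m B) i j ^+ 2 =
            dg Rt j * \sum_i dg L i * (A *m col j B) i 0 ^+ 2.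
    rewrite mulr_sumr; apply: eq_bigr => i _.
    rewrite (_ : (A *m B) i j = (A *m col j B) i 0); first by ring.
    by rewrite !mxE; apply: eq_bigr => k _; rewrite !mxE.
  have eR : \sum_i dg L i * dg Rt j * B i j ^+ 2 =
            dg Rt j * \sum_i dg L i * (col j B) i 0 ^+ 2.
    rewrite mulr_sumr; apply: eq_bigr => i _; rewrite !mxE; ring.
  rewrite eL eR mulrCA => h; by apply: ler_wpM2l.
move: n2 Rt hR B C l0 r0 W0 => [|n2] Rt hR B C l0 r0 W0.
  have z (Z : 'M[R]_(n1, 0)) : Wnorm L Rt Z = 0.
    by rewrite WnormE big1 ?sqrtr0 // => i _; rewrite big_ord0.
  by rewrite !z mulr0 mul0r.
have [jmin _ hmin] := arg_minP (fun k => dg Rt k) (P := xpredT) (i0 := ord0) isT.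
have [jmax _ hmax] := arg_maxP (fun k => dg Rt k) (P := xpredT) (i0 := ord0) isT.
have hc := cond_ge hR (fun k => hmin k isT) (fun k => hmax k isT).
have [K0 hK] := opM_bound hR C.
set K := opMnorm _ C in K0 hK *.
set rmin := dg Rt jmin in hc hmin *; set rmax := dg Rt jmax in hc hmax *.
have rmin0 : 0 < rmin by apply: dg_gt0.
have hd := dual rmin0 (fun k => hmin k isT) (fun k => hmax k isT) K0 hK.
set c := rmax / rmin * K in hd *.
have c0 : 0 <= c by rewrite !mulr_ge0 // ?invr_ge0 ltW // dg_gt0.
apply: (@le_trans _ _ (c * Wnorm L Rt B)).
  rewrite !WnormE.
  rewrite -(ger0_norm c0) -sqrtr_sqr -sqrtrM ?sqr_ge0 // ler_sqrt; last first.
    by rewrite mulr_ge0 ?sqr_ge0.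
  rewrite mulr_sumr; apply: ler_sum => i _.
  have := hd (fun k => B i k).
  have eL : \sum_j dg L i * dg Rt j * (B *m C) i j ^+ 2 =
            dg L i * \sum_j dg Rt j * (\sum_k B i k * C k j) ^+ 2.
    by rewrite mulr_sumr; apply: eq_bigr => j _; rewrite !mxE; ring.
  have eR : \sum_j dg L i * dg Rt j * B i j ^+ 2 =
            dg L i * \sum_k dg Rt k * B i k ^+ 2.
    by rewrite mulr_sumr; apply: eq_bigr => j _; ring.
  rewrite eL eR mulrCA => h; by apply: ler_wpM2l.
have Wb0 : 0 <= Wnorm L Rt B by rewrite WnormE sqrtr_ge0.
rewrite /c (_ : rmax / rmin * K * Wnorm L Rt B = rmax / rmin * Wnorm L Rt B * K); last by ring.
by apply: ler_wpM2r => //; apply: ler_wpM2r.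
Qed.
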